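(* Let $S$ be a finite right loop with $|S/\mathcal Z(S)|=k$, and let $\theta:G_S\to G_{S/\mathcal Z(S)}$ be the surjective homomorphism $f^S(y,z)\mapsto f^{S/\mathcal Z(S)}(\mathcal Z(S)\circ y,\mathcal Z(S)\circ z)$ induced by the natural projection. Then $\ker\theta$ is isomorphic to a subgroup of the abelian group $\mathcal Z(S)^{k-1}=\mathcal Z(S)\times\cdots\times\mathcal Z(S)$ ($k-1$ factors).
   Context: A right loop is a set $S$ with binary operation $\circ$ and two-sided identity $1$ such that each equation $X\circ a=b$ has a unique solution. For $y,z\in S$, $f^S(y,z):S\to S$ sends $x$ to the unique $X$ with $X\circ(y\circ z)=(x\circ y)\circ z$; $G_S\le\mathrm{Sym}(S)$ is generated by all $f^S(y,z)$. A congruence is an equivalence relation which is a right subloop of $S\times S$; an invariant right subloop is the class $T$ of $1$ under a congruence, $S/T=\{T\circ x\}$ with $(T\circ x)\circ(T\circ y)=T\circ(x\circ y)$. For congruences $\beta,\gamma$, $\gamma$ centralizes $\beta$ if there is a congruence $(\gamma|\beta)$ on the right loop $\beta\subseteq S\times S$ with: (i) $(x,y)(\gamma|\beta)(u,v)\Rightarrow x\gamma u$; (ii) for $(x,y)\in\beta$, $(u,v)\mapsto u$ is a bijection from the $(\gamma|\beta)$-class of $(x,y)$ to the $\gamma$-class of $x$; (iii) $(x,y)\in\gamma\Rightarrow(x,x)(\gamma|\beta)(y,y)$; (iv) $(x,y)(\gamma|\beta)(u,v)\Rightarrow(y,x)(\gamma|\beta)(v,u)$; (v) $(x,y)(\gamma|\beta)(u,v)$,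 $(y,z)(\gamma|\beta)(v,w)\Rightarrow(x,z)(\gamma|\beta)(u,w)$. The center congruence $\zeta(S)$ is the unique maximal congruence centralized by $S\times S$; the center $\mathcal Z(S)$ is its class of $1$, an abelian group under $\circ$. *)

(* Defs.v *)
From HB Require Import structures.
From mathcomp Require Import all_boot all_fingroup.
Set Implicit Arguments. Unset Strict Implicit. Unset Printing Implicit Defensive.

Local Open Scope group_scope.

Section RightLoops.
Variable T : finType.

Definition is_right_loop (op : T -> T -> T) (e : T) : Prop :=
  (forall x, op e x = x) /\ (forall x, op x e = x) /\
  (forall a b, exists! X, op X a = b).

Definition rdiv (op : T -> T -> T) (a b : T) : T :=
  odflt b [pick X | op X a == b].

Definition f_rl (op : T -> T -> T) (y z : T) (x : T) : T :=
  rdiv op (op y z) (op (op x y) z).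

(* f^S(y,z) as a permutation (it is injective when op is a right loop;
   the fallback 1 is never used for right loops) *)
Definition fperm (op : T -> T -> T) (y z : T) : {perm T} :=
  insubd (1 : {perm T}) [ffun x => f_rl op y z x].

Definition G_rl (op : T -> T -> T) : {group {perm T}} :=
  <<[set fperm op y z | y : T, z : T]>>%G.

(* Congruence on a sub-right-loop P of a right loop U: an equivalence
   relation on P which is a right subloop of P x P. *)
Definition is_congruence_in (U : Type) (P : U -> Prop) (opU : U -> U -> U)
    (eU : U) (R : U -> U -> Prop) : Prop :=
  [/\ (forall u v, R u v -> P u /\ P v),
      (forall u, P u -> R u u),
      (forall u v, R u v -> R v u),
      (forall u v w, R u v -> R v w -> R u w) &
      [/\ R eU eU,
          (forall a a' b b', R a a' -> R b b' -> R (opU a b) (opU a' b')) &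
          (forall a a' b b' X X', R a a' -> R b b' -> P X -> P X' ->
              opU X a = b -> opU X' a' = b' -> R X X')]].

Definition is_congruence (op : T -> T -> T) (e : T) (r : rel T) : Prop :=
  is_congruence_in (fun _ => True) op e (fun x y => r x y).

Definition pair_op (op : T -> T -> T) (p q : T * T) : T * T :=
  (op p.1 q.1, op p.2 q.2).

Definition centralizes (op : T -> T -> T) (e : T) (gamma beta : rel T) : Prop :=
  exists R : T * T -> T * T -> Prop,
    [/\ is_congruence_in (fun p => beta p.1 p.2) (pair_op op) (e, e) R,
        (forall x y u v, R (x, y) (u, v) -> gamma x u),
        (forall x y, beta x y ->
           (forall u v v', R (x, y) (u, v) -> R (x, y) (u, v') -> v = v') /\
           (forall u, gamma x u -> exists v, R (x, y) (u, v))),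
        (forall x y, gamma x y -> R (x, x) (y, y)) &
        [/\
            (forall x y u v, R (x, y) (u, v) -> R (y, x) (v, u)) &
            (forall x y z u v w, R (x, y) (u, v) -> R (y, z) (v, w) ->
               R (x, z) (u, w))]].

Definition is_center_congruence (op : T -> T -> T) (e : T) (zeta : rel T) : Prop :=
  [/\ is_congruence op e zeta,
      centralizes op e (fun _ _ => true) zeta &
      (forall beta : rel T, is_congruence op e beta ->
         centralizes op e (fun _ _ => true) beta ->
         forall x y, beta x y -> zeta x y)].

Definition center_of (e : T) (zeta : rel T) : {set T} := [set x | zeta e x].

Definition rl_coset (op : T -> T -> T) (Z : {set T}) (x : T) : {set T} :=
  [set op z x | z in Z].

Definition quot_set (op : T -> T -> T) (Z : {set T}) : {set {set T}} :=
  [set rl_coset op Z x | x : T].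

Definition rlquot_type (op : T -> T -> T) (Z : {set T}) :=
  {A : {set T} | A \in quot_set op Z}.

Lemma rl_coset_in_quot (op : T -> T -> T) (Z : {set T}) (x : T) :
  rl_coset op Z x \in quot_set op Z.
Proof. by apply/imsetP; exists x. Qed.

Definition qproj (op : T -> T -> T) (Z : {set T}) (x : T) : rlquot_type op Z :=
  exist _ (rl_coset op Z x) (rl_coset_in_quot op Z x).

(* a representative of a coset (default e, never used since 1 in Z) *)
Definition qrep (op : T -> T -> T) (Z : {set T}) (e : T) (A : rlquot_type op Z) : T :=
  odflt e [pick x in val A].

Definition qop (op : T -> T -> T) (Z : {set T}) (e : T)
    (A B : rlquot_type op Z) : rlquot_type op Z :=
  qproj op Z (op (qrep e A) (qrep e B)).

End RightLoops.

(* Main.v *)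
Require Import Defs.
From mathcomp Require Import all_boot all_fingroup.
Local Open Scope group_scope.

Lemma fpermE (U : finType) (op : U -> U -> U) y z :
  injective (f_rl op y z) -> forall x, fperm op y z x = f_rl op y z x.
Proof.
move=> inj x; rewrite /fperm.
have Hi : injectiveb [ffun x => f_rl op y z x].
  by apply/injectiveP => a b; rewrite !ffunE; apply: (inj).
by rewrite -pvalE insubdK // ffunE.
Qed.

Lemma gen_ind (gT : finGroupType) (A : {set gT}) (P : gT -> Prop) :
  P 1 -> (forall g a, g \in <<A>> -> a \in A -> P g -> P (g * a)) ->
  forall g, g \in <<A>> -> P g.
Proof.
move=> P1 PM g /gen_prodgP[n [c Hc ->]].
elim: n c Hc => [|n IH] c Hc; first by rewrite big_ord0.
rewrite big_ord_recr /=; apply: PM => //.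
- by apply: group_prod => i _; apply: (mem_gen).
- by apply: IH => i.
Qed.

Theorem mainTheorem13 (T : finType) (op : T -> T -> T) (e : T) (zeta : rel T)
  (HS : is_right_loop op e)
  (Hzeta : is_center_congruence op e zeta)
  (theta : {morphism G_rl op >-> {perm rlquot_type op (center_of e zeta)}})
  (Htheta : forall y z : T,
     theta (fperm op y z) =
     fperm (@qop T op (center_of e zeta) e)
           (qproj op (center_of e zeta) y) (qproj op (center_of e zeta) z)) :
  exists phi : {perm T} -> {ffun 'I_((#|quot_set op (center_of e zeta)|).-1) -> T},
    [/\ (forall g, g \in 'ker theta -> forall i, phi g i \in center_of e zeta),
        {in 'ker theta &, injective phi} &
        {in 'ker theta &, forall g h,
           phi (g * h)%g = [ffun i => op (phi g i) (phi h i)]}].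
Proof.
case: HS => Hel [Her Hdiv].
case: Hzeta => Hcong Hcent _.
case: Hcong => _ Zrefl Zsym Ztrans [_ Zop Zdiv].
case: Hcent => R [RC _ Rii Riii [_ _]].
case: RC => _ Rrefl _ Rtrans [_ Rop _].
have rdivP : forall a b, op (rdiv op a b) a = b.
  move=> a b; rewrite /rdiv; case: pickP => [X /eqP //| H].
  case: (Hdiv a b) => X [HX _]; by have := H X; rewrite HX eqxx.
have rcan : forall X Y a, op X a = op Y a -> X = Y.
  move=> X Y a E; case: (Hdiv a (op X a)) => X0 [_ U].
  by rewrite -(U X erefl) (U Y (esym E)).
have ZA : forall w, zeta e w -> forall u, R (e, w) (u, op w u).
  move=> w Hw u.
  have := Rop (e, w) (e, w) (e, e) (u, u) (Rrefl (e, w) Hw) (Riii e u isT).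
  by rewrite /pair_op /= !Hel Her.
have Z3 : forall w, zeta e w -> forall b c, op (op w b) c = op w (op b c).
  move=> w Hw b c.
  have H1 := Rop _ _ _ _ (ZA w Hw b) (Riii c c isT).
  rewrite /pair_op /= Hel in H1.
  have H2 := Rtrans _ _ _ (ZA w Hw c) H1.
  exact: (proj1 (Rii e w Hw)) H2 (ZA w Hw (op b c)).
have cosetE : forall x y, zeta x y -> zeta e (rdiv op x y) /\ op (rdiv op x y) x = y.
  move=> x y Hxy; split; last exact: (rdivP).
  apply: (Zsym).
  exact: (Zdiv x x y x _ _ (Zrefl x I) (Zsym _ _ Hxy) I I (rdivP x y) (Hel x)).
have coset2 : forall w x, zeta e w -> zeta x (op w x).
  by move=> w x Hw; have := Zop e w x x Hw (Zrefl x I); rewrite Hel.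
have memZ : forall w, (w \in center_of e zeta) = zeta e w by move=> w; rewrite inE.
have memc : forall x u, (u \in rl_coset op (center_of e zeta) x) = zeta x u.
  move=> x u; apply/imsetP/idP => [[w]|Hu].
    by rewrite memZ => Hw ->; apply: (coset2).
  exists (rdiv op x u); first by rewrite memZ; exact: (cosetE x u Hu).1.
  by rewrite (cosetE x u Hu).2.
have pi_eq : forall x y, zeta x y ->
    qproj op (center_of e zeta) x = qproj op (center_of e zeta) y.
  move=> x y Hxy; apply: val_inj => /=; apply/setP => u; rewrite !memc.
  apply/idP/idP => H; [exact: Ztrans _ _ _ (Zsym _ _ Hxy) H | exact: Ztrans _ _ _ Hxy H].
have pi_inv : forall x y,
    qproj op (center_of e zeta) x = qproj op (center_of e zeta) y -> zeta x y.
  move=> x y /(congr1 val) /= E.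
  have : y \in rl_coset op (center_of e zeta) y by rewrite memc; exact: (Zrefl).
  by rewrite -E memc.
have pi_surj : forall A : rlquot_type op (center_of e zeta),
    exists x, A = qproj op (center_of e zeta) x.
  case=> A HA; case/imsetP: (HA) => x _ EA; exists x; exact: (val_inj).
have qrepP : forall x, zeta x (qrep e (qproj op (center_of e zeta) x)).
  move=> x; rewrite /qrep; case: pickP => [r /= Hr | H].
    by move: Hr; rewrite memc.
  by have := H x; rewrite /= memc Zrefl.
have qopE : forall u v, (@qop T op (center_of e zeta) e) (qproj op (center_of e zeta) u)
    (qproj op (center_of e zeta) v) = qproj op (center_of e zeta) (op u v).
  move=> u v; rewrite /qop; apply: (pi_eq).
  exact: Zop _ _ _ _ (Zsym _ _ (qrepP u)) (Zsym _ _ (qrepP v)).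
have fP : forall y z x, op (f_rl op y z x) (op y z) = op (op x y) z.
  by move=> y z x; apply: (rdivP).
have finj : forall y z, injective (f_rl op y z).
  move=> y z x x' E; apply: (rcan _ _ y); apply: (rcan _ _ z).
  by rewrite -!fP E.
have qf : forall y z x,
    f_rl ((@qop T op (center_of e zeta) e)) (qproj op (center_of e zeta) y)
      (qproj op (center_of e zeta) z) (qproj op (center_of e zeta) x)
    = qproj op (center_of e zeta) (f_rl op y z x).
  move=> y z x; set fx := f_rl op y z x.
  rewrite /f_rl !qopE /rdiv; case: pickP => [X /eqP HX | H] /=.
    case: (pi_surj X) HX => w -> HX; rewrite qopE in HX.
    apply: (pi_eq).
    exact: (Zdiv (op y z) (op y z) _ _ w fx (Zrefl _ I) (pi_inv _ _ HX) I I erefl (fP y z x)).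
  by have := H (qproj op (center_of e zeta) fx); rewrite qopE fP eqxx.
have qfinj : forall y z, injective (f_rl ((@qop T op (center_of e zeta) e))
    (qproj op (center_of e zeta) y) (qproj op (center_of e zeta) z)).
  move=> y z A B; case: (pi_surj A) (pi_surj B) => [a ->] [b ->].
  rewrite !qf => /pi_inv E; apply: (pi_eq).
  have E2 := Zop _ _ _ _ E (Zrefl (op y z) I); rewrite !fP in E2.
  have E3 := Zdiv z z _ _ (op a y) (op b y) (Zrefl z I) E2 I I erefl erefl.
  exact: (Zdiv y y _ _ a b (Zrefl y I) E3 I I erefl erefl).
have thetaP : forall g, g \in G_rl op -> forall x,
    theta g (qproj op (center_of e zeta) x) = qproj op (center_of e zeta) (g x).
  apply: (@gen_ind _ [set fperm op y z | y : T, z : T] _).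
    by move=> x; rewrite morph1 !perm1.
  move=> g a Hg Ha IH x.
  rewrite morphM //; last exact: (mem_gen).
  rewrite !permM IH.
  case/imset2P: Ha => y z _ _ ->.
  by rewrite Htheta (@fpermE _ _ _ _ (qfinj y z)) qf (@fpermE _ _ _ _ (finj y z)).
have fixE : forall g, g \in G_rl op -> g e = e.
  apply: (@gen_ind _ [set fperm op y z | y : T, z : T] _); first exact: (perm1).
  move=> g a _ Ha IH; rewrite permM IH.
  case/imset2P: Ha => y z _ _ ->; rewrite (@fpermE _ _ _ _ (finj y z)).
  by apply: (rcan _ _ (op y z)); rewrite fP !Hel.
have commZ : forall g, g \in G_rl op -> forall w x, zeta e w -> g (op w x) = op w (g x).
  move=> g0 Hg0 w x0 Hw; move: g0 Hg0 x0.
  apply: (@gen_ind _ [set fperm op y z | y : T, z : T] _); first by move=> x; rewrite !perm1.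
  move=> g a _ Ha IH x; rewrite !permM IH.
  case/imset2P: Ha => y z _ _ ->; rewrite !(@fpermE _ _ _ _ (finj y z)).
  by apply: (rcan _ _ (op y z)); rewrite fP !(Z3 w Hw) fP.
have gzeta : forall g, g \in 'ker theta -> forall x, zeta x (g x).
  move=> g Hg x; apply: (pi_inv).
  by rewrite -thetaP ?(dom_ker Hg) // mker // perm1.
set Q' := quot_set op (center_of e zeta) :\ rl_coset op (center_of e zeta) e.
set L := [seq odflt e [pick x in C] | C : {set T} <- enum Q'].
have sizeL : size L = (#|quot_set op (center_of e zeta)|).-1.
  by rewrite size_map -cardE (cardsD1 (rl_coset op (center_of e zeta) e) (quot_set op (center_of e zeta))) rl_coset_in_quot.
have cover : forall x, ~~ zeta e x -> exists i : 'I_((#|quot_set op (center_of e zeta)|).-1),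
    zeta x (nth e L i).
  move=> x Hx.
  set r := odflt e [pick u in rl_coset op (center_of e zeta) x].
  have Hr : zeta x r.
    rewrite /r; case: pickP => [u /= Hu | H]; first by move: Hu; rewrite memc.
    by have := H x; rewrite /= memc Zrefl.
  have rL : r \in L.
    apply: map_f; rewrite mem_enum !inE rl_coset_in_quot andbT.
    apply/negP => /eqP E.
    have : x \in rl_coset op (center_of e zeta) x by rewrite memc; exact: (Zrefl).
    by rewrite E memc (negbTE Hx).
  have iL : index r L < (#|quot_set op (center_of e zeta)|).-1 by rewrite -sizeL index_mem.
  by exists (Ordinal iL); rewrite /= nth_index.
exists (fun g : {perm T} => [ffun i : 'I_((#|quot_set op (center_of e zeta)|).-1) => rdiv op (nth e L i) (g (nth e L i))]).
split.
- move=> g Hg i; rewrite ffunE memZ; exact: (cosetE _ _ (gzeta g Hg _)).1.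
- move=> g h Hg Hh E; apply/permP => x.
  have gG := dom_ker Hg; have hG := dom_ker Hh.
  case: (boolP (zeta e x)) => Hx.
    by rewrite -(Her x) (commZ g) // (commZ h) // !fixE.
  case: (cover x Hx) => i Hi; set r := nth e L i in Hi.
  have Ew := (cosetE r x (Zsym _ _ Hi)).2.
  have Zw := (cosetE r x (Zsym _ _ Hi)).1.
  rewrite -Ew (commZ g) // (commZ h) //.
  congr (op _ _).
  rewrite -(cosetE r (g r) (gzeta g Hg r)).2 -[in RHS](cosetE r (h r) (gzeta h Hh r)).2.
  by move/ffunP: E => /(_ i); rewrite !ffunE => ->.
- move=> g h Hg Hh; apply/ffunP => i; rewrite !ffunE.
  set r := nth e L i.
  have hG := dom_ker Hh.
  apply: (rcan _ _ r); rewrite rdivP permM.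
  have [Zcg Eg] := cosetE r (g r) (gzeta g Hg r).
  have [Zch Eh] := cosetE r (h r) (gzeta h Hh r).
  rewrite (Z3 _ Zcg) Eh.
  set cg := rdiv op r (g r) in Eg Zcg *.
  by rewrite -Eg (commZ h).
Qed.
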